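(* In a combinatorial auction as described in the context, a Walrasian equilibrium $(x^*,p)$ is a price-match equilibrium if and only if $$p\bm Ax^*=w(\mathcal I\setminus i,c,\mathcal K(p))\qquad\text{for all } i\in\mathcal I.$$
   Context: Combinatorial auction: item types $j\in\mathcal J$ with supply $c_j\in\mathbb Z_{\ge1}$ (vector $c$); bidders $\mathcal I$; finite set of bids $\mathcal K$, bid $k$ made by bidder $i(k)$ with bundle $a^k\in\mathbb Z^J_{\ge0}$, $a^k\le c$, amount $b_k\ge0$; $\mathcal K_i$ = bids of bidder $i$; bids taken truthful. $\bm A$ = matrix with columns $a^k$, $\bm B$ with $\bm B_{i,k}=1$ iff $k\in\mathcal K_i$. Feasible allocation: $x\in\{0,1\}^K$, $\bm Ax\le c$, $\bm Bx\le\bm 1$. For a set of bidders $\mathcal C$, supply $c'$ and a bid collection with given amounts, $w(\mathcal C,c',\cdot)$ = maximum total bid amount over feasible allocations with supply $c'$ using only bids of bidders in $\mathcal C$. $x^*$ efficient allocation; $a^{i*},b_{i*}$ bundle and amount of $i$'s accepted bid ($\bm 0,0$ if none). $\mathcal K(p)$ denotes the same bids with amounts replaced by $b^p_k=p\,a^k$ if $p\,a^k\le b_k$ and $b^p_k=0$ otherwise. A Walrasian equilibrium (WE) is $(x^*,p)$, $p\ge0$, with $s_i=b_{i*}-p\,a^{i*}\ge0$, $p\,a^k+s_{i(k)}\ge b_k$ for all bids $k$, and $p_j=0$ for items in excess supply under $x^*$. A WE is a price-match equilibrium (PME) if for every bidder $i$ there is a feasible allocation $x^{-i}$ with $x^{-i}_k=0$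 for $k\in\mathcal K_i$, $p\,a^k\le b_k$ whenever $x^{-i}_k=1$, and $p\bm Ax^{-i}=p\bm Ax^*$. (Items may include artificial items, i.e. valid cuts added as rows of $\bm A$.) *)

(* Defs.v *)
From HB Require Import structures.
From mathcomp Require Import all_boot all_order all_algebra.
Set Implicit Arguments. Unset Strict Implicit. Unset Printing Implicit Defensive.
Import Order.TTheory GRing.Theory Num.Theory.
Local Open Scope ring_scope.

(* Combinatorial auction.  I = bidders, J = item types, K = bids.
   owner k = i(k), a k j = a^k_j (bundle), b k = b_k (amount),
   c j = supply.  Allocations are boolean vectors x : K -> bool. *)
Section Auction.
Variables (R : realFieldType) (I J K : finType).
Variables (owner : K -> I) (a : K -> J -> nat).

Definition feasible (c' : J -> nat) (x : K -> bool) : bool :=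
  [forall j, (\sum_(k | x k) a k j <= c' j)%N] &&
  [forall i, (\sum_(k | x k && (owner k == i)) 1 <= 1)%N].

Definition uses_only (C : {set I}) (x : K -> bool) : bool :=
  [forall k, x k ==> (owner k \in C)].

Definition value (amt : K -> R) (x : K -> bool) : R := \sum_(k | x k) amt k.

(* w(C, c', amt): maximum total amount over feasible allocations with supply
   c' using only bids of bidders in C (the empty allocation is always
   feasible, so the maximum over a nonempty set; amounts are >= 0 here). *)
Definition w (C : {set I}) (c' : J -> nat) (amt : K -> R) : R :=
  \big[Num.max/0]_(x : {ffun K -> bool} | feasible c' x && uses_only C x)
     value amt x.

Definition price (p : J -> R) (k : K) : R := \sum_j p j * (a k j)%:R.

(* amounts of K(p) *)
Definition bp (b : K -> R) (p : J -> R) (k : K) : R :=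
  if price p k <= b k then price p k else 0.

Definition pAx (p : J -> R) (x : K -> bool) : R := \sum_(k | x k) price p k.

Definition efficient (c : J -> nat) (b : K -> R) (x : K -> bool) : Prop :=
  feasible c x /\
  forall y : K -> bool, feasible c y -> value b y <= value b x.

Definition astar (x : K -> bool) (i : I) (j : J) : nat :=
  (\sum_(k | x k && (owner k == i)) a k j)%N.
Definition bstar (b : K -> R) (x : K -> bool) (i : I) : R :=
  \sum_(k | x k && (owner k == i)) b k.

Definition surplus (b : K -> R) (x : K -> bool) (p : J -> R) (i : I) : R :=
  bstar b x i - \sum_j p j * (astar x i j)%:R.

Definition walrasian (c : J -> nat) (b : K -> R) (x : K -> bool) (p : J -> R)
  : Prop :=
  [/\ forall j, 0 <= p j,
      forall i, 0 <= surplus b x p i,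
      forall k, b k <= price p k + surplus b x p (owner k)
    & forall j, (\sum_(k | x k) a k j < c j)%N -> p j = 0].

Definition price_match (c : J -> nat) (b : K -> R) (x : K -> bool)
  (p : J -> R) : Prop :=
  walrasian c b x p /\
  forall i : I, exists xi : K -> bool,
    [/\ feasible c xi,
        forall k, owner k = i -> xi k = false,
        forall k, xi k -> price p k <= b k
      & pAx p xi = pAx p x].

End Auction.

(* Main.v *)
Require Import Defs.
From HB Require Import structures.
From mathcomp Require Import all_boot all_order all_algebra.
Import Order.TTheory GRing.Theory Num.Theory.
Local Open Scope ring_scope.

Lemma price_ge0 (R : realFieldType) (J K : finType) (a : K -> J -> nat)
  (p : J -> R) (hp : forall j, 0 <= p j) k : 0 <= price a p k.
Proof. by apply: sumr_ge0 => j _; apply: mulr_ge0. Qed.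

Lemma pAxE (R : realFieldType) (J K : finType) (a : K -> J -> nat)
  (p : J -> R) (x : K -> bool) :
  pAx a p x = \sum_j p j * (\sum_(k | x k) a k j)%:R.
Proof.
rewrite /pAx /price exchange_big /=; apply: eq_bigr => j _.
by rewrite natr_sum mulr_sumr.
Qed.

Lemma sub_feasible (I J K : finType) (owner : K -> I) (a : K -> J -> nat)
  c (x y : K -> bool) : feasible owner a c x -> (forall k, y k -> x k) ->
  feasible owner a c y.
Proof.
move=> /andP[/forallP H1 /forallP H2] sub; apply/andP; split.
  apply/forallP => j; apply: leq_trans (H1 j).
  rewrite [X in (_ <= X)%N](bigID y) /=.
  apply: leq_trans (leq_addr _ _); apply: eq_leq; apply: eq_bigl.
  by move=> k; case yk: (y k); [rewrite (sub _ yk) | rewrite andbF].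
apply/forallP => i; apply: leq_trans (H2 i).
rewrite [X in (_ <= X)%N](bigID y) /=.
apply: leq_trans (leq_addr _ _); apply: eq_leq; apply: eq_bigl.
by move=> k; case yk: (y k); [rewrite (sub _ yk) andbT | rewrite andbF].
Qed.

Theorem proposition4 (R : realFieldType) (I J K : finType)
  (owner : K -> I) (a : K -> J -> nat) (c : J -> nat) (b : K -> R)
  (hc : forall j, (0 < c j)%N)
  (ha : forall k j, (a k j <= c j)%N)
  (hb : forall k, 0 <= b k)
  (xstar : K -> bool) (p : J -> R)
  (heff : efficient owner a c b xstar)
  (hwe : walrasian owner a c b xstar p) :
  price_match owner a c b xstar p <->
  (forall i : I,
     pAx a p xstar = w owner a (~: [set i]) c (bp a b p)).
Proof.
have [hp _ _ hex] := hwe.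
have [fx _] := heff.
have hub : forall y, feasible owner a c y -> pAx a p y <= pAx a p xstar.
  move=> y /andP[/forallP Hy _]; rewrite !pAxE; apply: ler_sum => j _.
  case: (ltnP (\sum_(k | xstar k) a k j) (c j)) => h.
    by rewrite hex // !mul0r.
  by apply: ler_wpM2l => //; rewrite ler_nat (leq_trans (Hy j)).
have hbp : forall y, value (bp a b p) y <= pAx a p y.
  move=> y; apply: ler_sum => k _; rewrite /bp.
  by case: ifP => // _; apply: price_ge0.
have hbp0 : forall k, 0 <= bp a b p k.
  by move=> k; rewrite /bp; case: ifP => // _; apply: price_ge0.
have hwle : forall i, w owner a (~: [set i]) c (bp a b p) <= pAx a p xstar.
  move=> i; apply: bigmax_le.
    by rewrite /pAx; apply: sumr_ge0 => k _; apply: price_ge0.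
  by move=> y /andP[fy _]; apply: le_trans (hbp y) (hub y fy).
split.
  move=> [_ H] i; have [xi [fxi oxi pxi exi]] := H i.
  apply/eqP; rewrite eq_le hwle andbT -exi.
  have -> : pAx a p xi = value (bp a b p) (finfun xi).
    rewrite /value /pAx; apply: eq_big => [k|k hk]; first by rewrite ffunE.
    by rewrite /bp pxi.
  apply: (le_bigmax_cond _ (P := fun y : {ffun K -> bool} =>
            feasible owner a c y && uses_only owner (~: [set i]) y)).
  apply/andP; split.
    by apply: sub_feasible fxi _ => k; rewrite ffunE.
  apply/forallP => k; rewrite ffunE; apply/implyP => hk.
  rewrite !inE; apply/eqP => ok; by rewrite oxi in hk.
move=> H; split => // i.
have [y /andP[fy uy] ey] : exists2 y : {ffun K -> bool},
    feasible owner a c y && uses_only owner (~: [set i]) y &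
    w owner a (~: [set i]) c (bp a b p) = value (bp a b p) y.
  rewrite /w; apply: (big_ind (fun v => exists2 y : {ffun K -> bool},
    feasible owner a c y && uses_only owner (~: [set i]) y &
    v = value (bp a b p) y)).
  - exists [ffun=> false]; last by rewrite /value big_pred0 // => k; rewrite ffunE.
    apply/andP; split.
      by apply: sub_feasible fx _ => k; rewrite ffunE.
    by apply/forallP => k; rewrite ffunE.
  - move=> u v [y1 h1 e1] [y2 h2 e2].
    by case: (leP u v) => _; [exists y2 | exists y1].
  - by move=> y hy; exists y.
exists (fun k => y k && (price a p k <= b k)); split.
- by apply: sub_feasible fy _ => k /andP[].
- move=> k ok; move/forallP: uy => /(_ k); case: (y k) => //= /implyP.
  by rewrite ok !inE eqxx.
- by move=> k /andP[].
rewrite (H i) ey /value /pAx big_mkcondr /=; apply: eq_bigr => k _.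
by rewrite /bp.
Qed.
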